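(* Let $R=k[t,t^{-1}]$ and $\mathcal R=(R,d/dt)$, and let $\mathcal A_1,\mathcal A_2$ be $\mathcal R$-conformal superalgebras such that the canonical maps $R\to\mathrm{Ctd}_k(\mathcal A_i)$, $r\mapsto r_{\mathcal A_i}$, are $k$-algebra isomorphisms for $i=1,2$. Then $\mathcal A_1\cong\mathcal A_2$ as $k$-conformal superalgebras if and only if $\mathcal A_1\cong\mathcal A_2$ as $\mathcal R$-conformal superalgebras.
   Context: Let $k$ be a field of characteristic $0$. An $\mathcal R$-conformal superalgebra (for $\mathcal R=(R,\delta_R)$, $R$ a commutative unital $k$-algebra with $k$-linear derivation $\delta_R$) is a $\mathbb Z/2\mathbb Z$-graded $R$-module $\mathcal A$ with parity-preserving $k$-linear $\partial_{\mathcal A}$ and $k$-bilinear products $a_{(n)}b$ ($n\in\mathbb Z_+$) satisfying: $a_{(n)}b=0$ for $n\gg0$; $(\partial_{\mathcal A}a)_{(n)}b=-na_{(n-1)}b$, $a_{(n)}\partial_{\mathcal A}b=\partial_{\mathcal A}(a_{(n)}b)+na_{(n-1)}b$; $\partial_{\mathcal A}(ra)=r\partial_{\mathcal A}a+\delta_R(r)a$; $a_{(n)}(rb)=r(a_{(n)}b)$, $(ra)_{(n)}b=\sum_j\frac1{j!}\delta_R^j(r)(a_{(n+j)}b)$. Homomorphisms: even $R$-linear maps preserving $n$-products and commuting with $\partial$. $k$-conformal means over $(k,0)$; restriction of scalars makes $\mathcal R$-conformal superalgebras $k$-conformal. $\mathrm{Ctd}_k(\mathcal A)$ is the set of even $k$-linear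 endomorphisms $\chi$ with $\chi(a_{(n)}b)=a_{(n)}\chi(b)$ for all $a,b,n$; $r_{\mathcal A}$ is $a\mapsto ra$. *)

(* Defs.v *)
From HB Require Import structures.
From mathcomp Require Import all_boot all_order all_algebra.
Set Implicit Arguments. Unset Strict Implicit. Unset Printing Implicit Defensive.
Import GRing.Theory.
Local Open Scope ring_scope.

Section Base.
Variables (k : fieldType) (R : comAlgType k).

Definition is_k_derivation (delta : R -> R) : Prop :=
  [/\ forall r s, delta (r + s) = delta r + delta s,
      forall r s, delta (r * s) = r * delta s + delta r * s
    & forall (c : k) r, delta (c *: r) = c *: delta r].

(* R = k[t, t^{-1}]: t is invertible with inverse ti, t is transcendental over k,
   and every element is ti^n * p(t) for a polynomial p; i.e. R is the
   k-algebra of Laurent polynomials in t (localisation of k[t] at t). *)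
Definition laurent_presentation (t ti : R) : Prop :=
  [/\ t * ti = 1,
      forall r : R, exists (n : nat) (p : {poly k}), r = ti ^+ n * horner_alg t p
    & forall p : {poly k}, horner_alg t p = 0 -> p = 0].
End Base.

Section Conformal.
Variables (k : fieldType) (R : comAlgType k) (delta : R -> R).

Definition is_Rsubmodule (V : lmodType R) (P : V -> Prop) : Prop :=
  [/\ P 0, forall a b, P a -> P b -> P (a + b)
    & forall (r : R) a, P a -> P (r *: a)].

Definition super_grading (V : lmodType R) (ev od : V -> Prop) : Prop :=
  [/\ is_Rsubmodule ev, is_Rsubmodule od,
      forall a, exists a0 a1, [/\ ev a0, od a1 & a = a0 + a1]
    & forall a, ev a -> od a -> a = 0].

Definition conf_axioms (V : lmodType R) (ev od : V -> Prop) (der : V -> V)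
    (prod : nat -> V -> V -> V) : Prop :=
  super_grading ev od /\
      (forall a, (ev a -> ev (der a)) /\ (od a -> od (der a))) /\
      (forall a b, der (a + b) = der a + der b) /\
      (* products are k-bilinear (additivity; scalars follow from the R-axioms)
         and respect the parity *)
      (forall n a b c, prod n (a + b) c = prod n a c + prod n b c
                    /\ prod n a (b + c) = prod n a b + prod n a c) /\
      (forall n a b,
          [/\ ev a -> ev b -> ev (prod n a b), ev a -> od b -> od (prod n a b),
              od a -> ev b -> od (prod n a b) & od a -> od b -> ev (prod n a b)]) /\
      (forall a b, exists N : nat, forall n, (N <= n)%N -> prod n a b = 0) /\
      (forall n a b, prod n (der a) b = - (prod n.-1 a b *+ n)) /\
      (forall n a b, prod n a (der b) = der (prod n a b) + prod n.-1 a b *+ n) /\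
      (forall (r : R) a, der (r *: a) = r *: der a + delta r *: a) /\
      (forall n (r : R) a b, prod n a (r *: b) = r *: prod n a b) /\
      (forall n (r : R) a b (N : nat),
          (forall m, (n + N <= m)%N -> prod m a b = 0) ->
          prod n (r *: a) b =
          \sum_(j < N) ((((j`!)%:R : k)^-1 *: iter j delta r) *: prod (n + j) a b)).

Record conf_superalg := ConfSuperalg {
  csa_car : lmodType R;
  csa_even : csa_car -> Prop;
  csa_odd : csa_car -> Prop;
  csa_der : csa_car -> csa_car;
  csa_prod : nat -> csa_car -> csa_car -> csa_car;
  csa_ax : conf_axioms csa_even csa_odd csa_der csa_prod }.

Definition kscale (V : lmodType R) (c : k) (a : V) : V := (c%:A : R) *: a.

Definition in_centroid (A : conf_superalg) (chi : csa_car A -> csa_car A) : Prop :=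
  [/\ forall a, (csa_even a -> csa_even (chi a)) /\ (csa_odd a -> csa_odd (chi a)),
      forall a b, chi (a + b) = chi a + chi b,
      forall (c : k) a, chi (kscale c a) = kscale c (chi a)
    & forall n a b, chi (csa_prod n a b) = csa_prod n a (chi b)].

(* the canonical map R -> Ctd_k(A), r |-> r_A, is a k-algebra isomorphism:
   it lands in Ctd_k(A), is injective and is surjective.  (It is automatically
   a k-algebra homomorphism for composition of endomorphisms.) *)
Definition canonical_ctd_iso (A : conf_superalg) : Prop :=
  [/\ forall r : R, @in_centroid A (fun a : csa_car A => r *: a),
      forall r s : R, (forall a : csa_car A, r *: a = s *: a) -> r = s
    & forall chi : csa_car A -> csa_car A, in_centroid chi -> exists r : R, forall a, chi a = r *: a].

Definition conf_hom_common (A B : conf_superalg) (f : csa_car A -> csa_car B) : Prop :=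
  [/\ forall a, (csa_even a -> csa_even (f a)) /\ (csa_odd a -> csa_odd (f a)),
      forall a b, f (a + b) = f a + f b,
      forall n a b, f (csa_prod n a b) = csa_prod n (f a) (f b)
    & forall a, f (csa_der a) = csa_der (f a)].

Definition R_conf_iso (A B : conf_superalg) (f : csa_car A -> csa_car B) : Prop :=
  [/\ bijective f, conf_hom_common f & forall (r : R) a, f (r *: a) = r *: f a].

(* isomorphism of the k-conformal superalgebras obtained by restriction of scalars
   (along (k,0) -> (R,delta)) *)
Definition k_conf_iso (A B : conf_superalg) (f : csa_car A -> csa_car B) : Prop :=
  [/\ bijective f, conf_hom_common f & forall (c : k) a, f (kscale c a) = kscale c (f a)].

Definition R_conf_isomorphic (A B : conf_superalg) : Prop := exists f : csa_car A -> csa_car B, R_conf_iso f.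
Definition k_conf_isomorphic (A B : conf_superalg) : Prop := exists f : csa_car A -> csa_car B, k_conf_iso f.

End Conformal.

(* Main.v *)
Require Import Defs.
From HB Require Import structures.
From mathcomp Require Import all_boot all_order all_algebra.
Import GRing.Theory.
Local Open Scope ring_scope.

Section Alg.
Variables (k : fieldType) (hk : [pchar k] =i pred0) (R : comAlgType k) (t ti : R)
  (delta : R -> R) (hR : laurent_presentation t ti)
  (hdelta : is_k_derivation delta) (hdt : delta t = 1).

Lemma dD r s : delta (r + s) = delta r + delta s.
Proof. by case: hdelta. Qed.
Lemma dM r s : delta (r * s) = r * delta s + delta r * s.
Proof. by case: hdelta. Qed.
Lemma dZ (c : k) r : delta (c *: r) = c *: delta r.
Proof. by case: hdelta. Qed.
Lemma d0 : delta 0 = 0.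
Proof. by apply: (@addrI _ (delta 0)); rewrite -dD !addr0. Qed.
Lemma dN r : delta (- r) = - delta r.
Proof. by apply/eqP; rewrite -addr_eq0 -dD addNr d0. Qed.
Lemma d1 : delta 1 = 0.
Proof.
have e := dM 1 1; rewrite ?mul1r ?mulr1 in e.
by apply: (@addIr _ (delta 1)); rewrite add0r -e.
Qed.
Lemma dC (c : k) : delta c%:A = 0.
Proof. by rewrite dZ d1 scaler0. Qed.

Lemma d_horner (p : {poly k}) : delta (horner_alg t p) = horner_alg t p^`().
Proof.
elim/poly_ind: p => [|p c IH]; first by rewrite !rmorph0 d0 deriv0 rmorph0.
rewrite derivMXaddC !rmorphD !rmorphM /= !horner_algX !horner_algC.
by rewrite dD dC addr0 dM IH hdt mulr1.
Qed.

Lemma transc (p q : {poly k}) : horner_alg t p = horner_alg t q -> p = q.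
Proof.
case: hR => _ _ H e; apply/eqP; rewrite -subr_eq0; apply/eqP/H.
by rewrite rmorphB /= e subrr.
Qed.

Lemma tti n : t ^+ n * ti ^+ n = 1.
Proof. by case: hR => H _ _; rewrite -exprMn H expr1n. Qed.

Lemma titi n : ti ^+ n * t ^+ n = 1.
Proof. by rewrite mulrC tti. Qed.

Lemma constants (w : R) : delta w = 0 -> exists c : k, w = c%:A.
Proof.
move=> dw; case: hR => _ /(_ w) [n [p ew]] _.
have tw : t ^+ n * w = horner_alg t p by rewrite ew mulrA tti mul1r.
have tn : t ^+ n = horner_alg t 'X^n by rewrite rmorphXn /= horner_algX.
have E : 'X * p^`() = p *+ n.
  apply: transc; rewrite rmorphM /= horner_algX -d_horner -tw dM dw mulr0 add0r.
  rewrite tn d_horner derivXn rmorphMn rmorphXn /= horner_algX rmorphMn /= -tw.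
  case: n {ew tw tn} => [|n]; first by rewrite !mulr0n mul0r mulr0.
  by rewrite /= mulrnAl mulrnAr mulrA -exprS.
have coef i : i != n -> p`_i = 0.
  move=> ni; have := congr1 (fun q : {poly k} => q`_i) E; rewrite coefXM coefMn coef_deriv /=.
  case: i ni => [|i] ni /=.
    move/esym/eqP; rewrite -mulr_natr mulf_eq0 ((pcharf0P _).1 hk); rewrite eq_sym in ni; rewrite (negbTE ni) orbF.
    by move/eqP.
  set x := p`_i.+1; move=> e; case: (ltnP i.+1 n) => hi.
    move: e; rewrite -(subnKC (ltnW hi)) mulrnDr => /eqP; rewrite -subr_eq0 opprD addrA subrr add0r.
    rewrite oppr_eq0 -mulr_natr mulf_eq0 ((pcharf0P _).1 hk) subn_eq0 leqNgt hi orbF.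
    by move/eqP.
  move: e; rewrite -(subnKC hi) mulrnDr => /eqP; rewrite -subr_eq0 addrAC subrr add0r.
  rewrite -mulr_natr mulf_eq0 ((pcharf0P _).1 hk) subn_eq0.
  have -> : (i.+1 <= n)%N = false by rewrite leq_eqVlt (negbTE ni) ltnNge hi.
  by rewrite orbF => /eqP.
have pe : p = p`_n *: 'X^n.
  apply/polyP => i; rewrite coefZ coefXn; case: eqP => [->|/eqP ni].
    by rewrite mulr1.
  by rewrite mulr0 coef.
have e : t ^+ n * w = (p`_n)%:A * t ^+ n.
  by rewrite tw {1}pe linearZ /= -tn mulr_algl.
exists p`_n.
have : ti ^+ n * (t ^+ n * w) = ti ^+ n * ((p`_n)%:A * t ^+ n) by rewrite e.
by rewrite !mulrA titi mul1r [_ * _%:A]mulrC -mulrA titi mulr1 => ->.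
Qed.

Lemma unit_prim (u v : R) : delta u = 1 -> u * v = 1 -> u = t.
Proof.
move=> du uv.
have [c ec] : exists c : k, u - t = c%:A by apply: constants; rewrite dD dN hdt du subrr.
have eu : u = horner_alg t ('X + c%:P) by rewrite rmorphD /= horner_algX horner_algC -ec addrC subrK.
case: hR => _ /(_ v) [m [q ev]] _.
have E : ('X + c%:P) * q = 'X^m.
  apply: transc; rewrite rmorphM rmorphXn /= horner_algX -eu.
  by rewrite -[t ^+ m]mulr1 -uv ev mulrCA [t ^+ m * _]mulrA tti mul1r.
have := congr1 (fun p : {poly k} => p.[- c]) E; rewrite /= hornerM hornerXn hornerD hornerX hornerC addNr mul0r.
move/esym/eqP; rewrite expf_eq0 oppr_eq0 => /andP [_ /eqP c0].
by move: ec; rewrite c0 scale0r => /eqP; rewrite subr_eq0 => /eqP.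
Qed.
End Alg.

Section Main.
Variables (k : fieldType) (R : comAlgType k) (delta : R -> R).
Variables (A1 A2 : conf_superalg delta).
Variable (h2 : canonical_ctd_iso A2).
Variable f : csa_car A1 -> csa_car A2.
Hypothesis hf : k_conf_iso f.

Lemma ax_sub (A : conf_superalg delta) :
  is_Rsubmodule (@csa_even _ _ _ A) /\ is_Rsubmodule (@csa_odd _ _ _ A).
Proof. by case: (csa_ax A) => [[? ? ? ?] _]. Qed.
Lemma ax_dec (A : conf_superalg delta) (a : csa_car A) :
  exists a0 a1 : csa_car A, [/\ @csa_even _ _ _ A a0, @csa_odd _ _ _ A a1 & a = a0 + a1].
Proof. by case: (csa_ax A) => [[? ? H ?] _]; apply: H. Qed.
Lemma ax_int (A : conf_superalg delta) (a : csa_car A) : @csa_even _ _ _ A a -> @csa_odd _ _ _ A a -> a = 0.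
Proof. by case: (csa_ax A) => [[? ? ? H] _]; apply: H. Qed.
Lemma ax_derZ (A : conf_superalg delta) (r : R) (a : csa_car A) :
  csa_der (r *: a) = r *: csa_der a + delta r *: a.
Proof. by case: (csa_ax A) => [_ [_ [_ [_ [_ [_ [_ [_ [H _]]]]]]]]]; apply: H. Qed.
Lemma ax_prodZ (A : conf_superalg delta) n (r : R) (a b : csa_car A) :
  csa_prod n a (r *: b) = r *: csa_prod n a b.
Proof. by case: (csa_ax A) => [_ [_ [_ [_ [_ [_ [_ [_ [_ [H _]]]]]]]]]]; apply: H. Qed.

Arguments ax_dec {A}. Arguments ax_int {A}. Arguments ax_derZ {A}. Arguments ax_prodZ {A}.

Lemma sub_neg (A : conf_superalg delta) (P : csa_car A -> Prop) :
  is_Rsubmodule P -> forall a b, P a -> P b -> P (a - b).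
Proof. by case=> _ HD HZ a b Pa Pb; apply: HD => //; rewrite -scaleN1r; apply: HZ. Qed.


Arguments sub_neg {A P}.
Let V1 := csa_car A1.
Let V2 := csa_car A2.

Lemma f_bij : bijective f. Proof. by case: hf. Qed.
Lemma fadd a b : f (a + b) = f a + f b. Proof. by case: hf => _ [] . Qed.
Lemma fpar a : (csa_even a -> csa_even (f a)) /\ (csa_odd a -> csa_odd (f a)).
Proof. by case: hf => _ []. Qed.
Lemma fprod n a b : f (csa_prod n a b) = csa_prod n (f a) (f b).
Proof. by case: hf => _ []. Qed.
Lemma fder a : f (csa_der a) = csa_der (f a).
Proof. by case: hf => _ []. Qed.
Lemma fk c a : f (kscale c a) = kscale c (f a).
Proof. by case: hf. Qed.

Variable g : csa_car A2 -> csa_car A1.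
Hypotheses (fg : cancel f g) (gf : cancel g f).
Lemma f_inj : injective f. Proof. exact: can_inj fg. Qed.

Lemma f0 : f 0 = 0.
Proof. by apply: (@addrI _ (f 0)); rewrite -fadd !addr0. Qed.
Lemma gadd a b : g (a + b) = g a + g b.
Proof. by apply: f_inj; rewrite fadd !gf. Qed.
Lemma gk c a : g (kscale c a) = kscale c (g a).
Proof. by apply: f_inj; rewrite fk !gf. Qed.
Lemma gprod n a b : g (csa_prod n a b) = csa_prod n (g a) (g b).
Proof. by apply: f_inj; rewrite fprod !gf. Qed.

Lemma gev b : csa_even b -> csa_even (g b).
Proof.
move=> eb; have [a0 [a1 [e0 o1 ea]]] := ax_dec (g b).
have fa1 : f a1 = b - f a0 by rewrite -(gf b) ea fadd addrAC subrr add0r.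
have : f a1 = 0.
  apply: ax_int; last by case: (fpar a1) => _; apply.
  rewrite fa1; apply: (sub_neg (ax_sub A2).1) => //; by case: (fpar a0) => H _; apply: H.
rewrite -f0 => /f_inj a10; by rewrite ea a10 addr0.
Qed.
Lemma god b : csa_odd b -> csa_odd (g b).
Proof.
move=> ob; have [a0 [a1 [e0 o1 ea]]] := ax_dec (g b).
have fa0 : f a0 = b - f a1 by rewrite -(gf b) ea fadd addrK.
have : f a0 = 0.
  apply: ax_int; first by case: (fpar a0) => H _; apply: H.
  rewrite fa0; apply: (sub_neg (ax_sub A2).2) => //; by case: (fpar a1) => _; apply.
rewrite -f0 => /f_inj a00; by rewrite ea a00 add0r.
Qed.

Definition Sig (r s : R) := forall b : V2, f (r *: g b) = s *: b.

Lemma Sig_ex r : exists s, Sig r s.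
Proof.
case: h2 => _ _ H; apply: H; split.
- move=> a; split=> h; case: (fpar (r *: g a)) => H1 H2.
    by apply: H1; case: (ax_sub A1) => [[_ _ HZ] _]; apply: HZ; apply: gev.
  by apply: H2; case: (ax_sub A1) => [_ [_ _ HZ]]; apply: HZ; apply: god.
- by move=> a b; rewrite gadd scalerDr fadd.
- by move=> c a; rewrite gk -fk /kscale !scalerA mulrC.
- by move=> n a b; rewrite gprod -ax_prodZ fprod gf.
Qed.

Lemma Sig_uniq r s s' : Sig r s -> Sig r s' -> s = s'.
Proof. by case: h2 => _ H _ S1 S2; apply: H => b; rewrite -S1 -S2. Qed.

Lemma Sig1 : Sig 1 1.
Proof. by move=> b; rewrite !scale1r gf. Qed.
Lemma Sig0 : Sig 0 0.
Proof. by move=> b; rewrite !scale0r f0. Qed.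
Lemma SigD r s r' s' : Sig r s -> Sig r' s' -> Sig (r + r') (s + s').
Proof. by move=> S1 S2 b; rewrite scalerDl fadd S1 S2 scalerDl. Qed.
Lemma SigM r s r' s' : Sig r s -> Sig r' s' -> Sig (r * r') (s * s').
Proof.
move=> S1 S2 b; rewrite -scalerA -[r' *: g b]fg S1 S2 scalerA //.
Qed.
Lemma SigZ (c : k) r s : Sig r s -> Sig (c *: r) (c *: s).
Proof.
move=> S1 b.
have e1 : (c *: r) *: g b = c%:A *: (r *: g b) by rewrite scalerA mulr_algl.
have e2 : (c *: s) *: b = c%:A *: (s *: b) by rewrite scalerA mulr_algl.
by rewrite e1 e2 -S1; apply: fk.
Qed.
Lemma Sigd r s : Sig r s -> Sig (delta r) (delta s).
Proof.
move=> S1; have [s' S2] := Sig_ex (delta r).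
suff -> : delta s = s' by [].
case: h2 => _ H _; apply: H => b.
have := ax_derZ r (g b); move/(congr1 f); rewrite fder S1 fadd S2 ax_derZ.
by rewrite -[csa_der (g b)]fg S1 fder gf => /addrI.
Qed.


Arguments SigD {r s r' s'}. Arguments SigM {r s r' s'}. Arguments SigZ c {r s}. Arguments Sigd {r s}. Arguments Sig_uniq {r s s'}.
Section Final.
Variables (hk : [pchar k] =i pred0) (t ti : R)
  (hR : laurent_presentation t ti)
  (hdelta : is_k_derivation delta) (hdt : delta t = 1).

Lemma Sig_all r : Sig r r.
Proof.
have [u Su] := Sig_ex t; have [v Sv] := Sig_ex ti.
have tti1 : t * ti = 1 by case: hR.
have uv : u * v = 1.
  have := SigM Su Sv; rewrite tti1 => S; exact: esym (Sig_uniq Sig1 S).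
have du : delta u = 1.
  have := Sigd Su; rewrite hdt => S; exact: esym (Sig_uniq Sig1 S).
have ut : u = t := @unit_prim k hk R t ti delta hR hdelta hdt u v du uv.
have vt : v = ti.
  by rewrite -[v]mul1r -tti1 mulrC mulrA -ut [v * u]mulrC uv mul1r.
rewrite ut in Su; rewrite vt in Sv.
have Hp p : Sig (horner_alg t p) (horner_alg t p).
  elim/poly_ind: p => [|p c IH]; first by rewrite rmorph0; apply: Sig0.
  rewrite rmorphD rmorphM /= horner_algX horner_algC.
  by apply: SigD; [apply: SigM | apply: SigZ; apply: Sig1].
have Hn n : Sig (ti ^+ n) (ti ^+ n).
  elim: n => [|n IH]; first by rewrite expr0; apply: Sig1.
  by rewrite exprS; apply: SigM.
by case: hR => _ /(_ r) [n [p ->]] _; apply: SigM.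
Qed.

Lemma flin r a : f (r *: a) = r *: f a.
Proof. by rewrite -{1}(fg a) Sig_all. Qed.
End Final.
End Main.


Theorem corollary3p27 (k : fieldType) (hk : [pchar k] =i pred0)
    (R : comAlgType k) (t ti : R) (delta : R -> R)
    (hR : laurent_presentation t ti)
    (hdelta : is_k_derivation delta) (hdt : delta t = 1)
    (A1 A2 : conf_superalg delta)
    (h1 : canonical_ctd_iso A1) (h2 : canonical_ctd_iso A2) :
  k_conf_isomorphic A1 A2 <-> R_conf_isomorphic A1 A2.
Proof.
split.
- case=> f hf; have hf' := hf; case: hf' => [[g fg gf] hc _].
  exists f; split => //; first by exists g.
  exact: (@flin k R delta A1 A2 h2 f hf g fg gf hk t ti hR hdelta hdt).
- case=> f [hb hc hr]; exists f; split => // c a.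
  by rewrite /kscale hr.
Qed.
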